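(* Let $(f_n):\underline G=(G_n,p_n)\to\underline H=(H_n,q_n)$ be a level morphism of inverse sequences of groups which induces an isomorphism $\tilde f:\varprojlim G_n\to\varprojlim H_n$, $\tilde f((g_n))=(f_n(g_n))$. If $\underline G$ and $\underline H$ are Mittag-Leffler and $\pi_n(G)$ is countable for all $n$, where $G=\varprojlim G_n$ and $\pi_n:G\to G_n$ is the natural projection, then the morphism $\underline f:\underline G\to\underline H$ of \textbf{Tower-Grp} determined by $(f_n)$ is an isomorphism in \textbf{Tower-Grp}.
   Context: A level morphism $(f_n)$ consists of homomorphisms $f_n:G_n\to H_n$ with $f_n\circ p_n=q_n\circ f_{n+1}$ for all $n$. An inverse sequence $(G_n,p_n)$ is Mittag-Leffler if for every $n_0$ there is $n_1>n_0$ with $p_{n_0n}(G_n)=p_{n_0n_1}(G_{n_1})$ for all $n>n_1$, where $p_{nm}=p_n\circ\cdots\circ p_{m-1}$. \textbf{Tower-Grp}: objects inverse sequences of groups; morphisms $(f_n,\Phi)$ with $\Phi:\mathbb{N}\to\mathbb{N}$, homomorphisms $f_n:G_{\Phi(n)}\to H_n$ such that for all $n'>n$ there is $m\ge\Phi(n),\Phi(n')$ with $f_n\circ p_{\Phi(n)m}=q_{nn'}\circ f_{n'}\circ p_{\Phi(n')m}$, modulo: $(f_n,\Phi)\sim(g_n,\Psi)$ if every $n$ admits $m\ge\Phi(n),\Psi(n)$ with $f_n\circ p_{\Phi(n)m}=g_n\circ p_{\Psi(n)m}$; composition $(g_n\circ f_{\Psi(n)},\Phi\circ\Psi)$. *)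

(* Defs.v *)
From mathcomp Require Import all_boot.
Set Implicit Arguments.
Unset Strict Implicit.
Unset Printing Implicit Defensive.

Record grp := Grp {
  gcar :> Type;
  gmul : gcar -> gcar -> gcar;
  gone : gcar;
  ginv : gcar -> gcar;
  gmulA : forall x y z, gmul x (gmul y z) = gmul (gmul x y) z;
  gmul1 : forall x, gmul gone x = x;
  gmulV : forall x, gmul (ginv x) x = gone
}.

Definition is_hom (G H : grp) (f : G -> H) : Prop :=
  forall x y, f (gmul x y) = gmul (f x) (f y).

Record invseq := InvSeq {
  sG :> nat -> grp;
  sp : forall n, sG n.+1 -> sG n;
  sp_hom : forall n, @is_hom (sG n.+1) (sG n) (@sp n)
}.
Arguments sp : clear implicits.

Section Bonding.
Variable S : invseq.

Fixpoint pdown (n k : nat) : S (k + n) -> S n :=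
  match k return S (k + n) -> S n with
  | 0 => fun x => x
  | k'.+1 => fun x => @pdown n k' (sp S (k' + n) x)
  end.

Definition castS (m m' : nat) (e : m = m') (x : S m) : S m' :=
  eq_rect m (fun i => S i) x m' e.

(* p_{nm} : S m -> S n for n <= m; for m < n (never used) it is the
   constant map to the identity element. *)
Definition pnm (n m : nat) : S m -> S n :=
  match (n <= m) as b return (n <= m) = b -> S m -> S n with
  | true => fun h x => @pdown n (m - n) (castS (esym (subnK h)) x)
  | false => fun _ _ => gone (S n)
  end (erefl (n <= m)).
End Bonding.

Definition level_morphism (G H : invseq) (f : forall n, G n -> H n) : Prop :=
  (forall n, is_hom (f n)) /\
  (forall n (x : G n.+1), f n (sp G n x) = sp H n (f n.+1 x)).

Definition thread (G : invseq) (g : forall n, G n) : Prop :=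
  forall n, sp G n (g n.+1) = g n.

(* the induced map  (g_n) |-> (f_n(g_n))  is a bijection of inverse limits
   (it is automatically a homomorphism, so this means: group isomorphism) *)
Definition induces_iso_lim (G H : invseq) (f : forall n, G n -> H n) : Prop :=
  (forall g g', thread g -> thread g' ->
     (forall n, f n (g n) = f n (g' n)) -> forall n, g n = g' n) /\
  (forall h, thread h -> exists g, thread g /\ forall n, f n (g n) = h n).

Definition mittag_leffler (G : invseq) : Prop :=
  forall n0, exists n1, n0 < n1 /\
    forall n, n1 < n -> forall x : G n0,
      (exists y : G n, @pnm G n0 n y = x) <-> (exists z : G n1, @pnm G n0 n1 z = x).

Definition countable_set (T : Type) (A : T -> Prop) : Prop :=
  exists c : {x : T | A x} -> nat, injective c.

Definition proj_image (G : invseq) (n : nat) : G n -> Prop :=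
  fun x => exists g, thread g /\ g n = x.

Definition is_tmor (G H : invseq) (Phi : nat -> nat)
    (f : forall n, G (Phi n) -> H n) : Prop :=
  (forall n, is_hom (f n)) /\
  (forall n n', n < n' -> exists m, Phi n <= m /\ Phi n' <= m /\
     forall x : G m, f n (@pnm G (Phi n) m x) = @pnm H n n' (f n' (@pnm G (Phi n') m x))).

Definition tequiv (G H : invseq) (Phi : nat -> nat) (f : forall n, G (Phi n) -> H n)
    (Psi : nat -> nat) (g : forall n, G (Psi n) -> H n) : Prop :=
  forall n, exists m, Phi n <= m /\ Psi n <= m /\
    forall x : G m, f n (@pnm G (Phi n) m x) = g n (@pnm G (Psi n) m x).

Definition tcomp_idx (Phi Psi : nat -> nat) : nat -> nat := fun n => Phi (Psi n).
Definition tcomp_map (G H K : invseq) (Phi : nat -> nat) (f : forall n, G (Phi n) -> H n)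
    (Psi : nat -> nat) (g : forall n, H (Psi n) -> K n) :
    forall n, G (tcomp_idx Phi Psi n) -> K n :=
  fun n x => g n (f (Psi n) x).

Definition tid_idx : nat -> nat := fun n => n.
Definition tid_map (G : invseq) : forall n, G (tid_idx n) -> G n := fun n x => x.

Definition tower_iso (G H : invseq) (Phi : nat -> nat) (f : forall n, G (Phi n) -> H n) : Prop :=
  exists (Psi : nat -> nat) (g : forall n, H (Psi n) -> G n),
    @is_tmor H G Psi g /\
    @tequiv G G (tcomp_idx Phi Psi) (@tcomp_map G H G Phi f Psi g)
                tid_idx (@tid_map G) /\
    @tequiv H H (tcomp_idx Psi Phi) (@tcomp_map H G H Psi g Phi f)
                tid_idx (@tid_map H).

(* Main.v *)
Require Import Defs.
From mathcomp Require Import all_boot.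
From Stdlib Require Import ClassicalEpsilon.
From mathcomp Require Import zify.
Set Implicit Arguments. Unset Strict Implicit. Unset Printing Implicit Defensive.

Lemma mulgV (G : grp) (x : G) : gmul x (ginv x) = gone G.
Proof.
transitivity (gmul (gmul (ginv (ginv x)) (ginv x)) (gmul x (ginv x))).
  by rewrite gmulV gmul1.
by rewrite -gmulA [gmul (ginv x) (gmul x (ginv x))]gmulA gmulV gmul1 gmulV.
Qed.

Lemma mulg1 (G : grp) (x : G) : gmul x (gone G) = x.
Proof. by rewrite -(gmulV x) gmulA mulgV gmul1. Qed.

Lemma mulKg (G : grp) (x y : G) : gmul (ginv x) (gmul x y) = y.
Proof. by rewrite gmulA gmulV gmul1. Qed.

Lemma mulKVg (G : grp) (x y : G) : gmul x (gmul (ginv x) y) = y.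
Proof. by rewrite gmulA mulgV gmul1. Qed.

Lemma mulg_cancel (G : grp) (x y z : G) : gmul x y = gmul x z -> y = z.
Proof. by move=> e; rewrite -(mulKg x y) e mulKg. Qed.

Lemma inv_uniq (G : grp) (a b : G) : gmul a b = gone G -> a = ginv b.
Proof. by move=> e; rewrite -(mulg1 a) -(mulgV b) gmulA e gmul1. Qed.

Lemma inv_uniqr (G : grp) (a b : G) : gmul a b = gone G -> b = ginv a.
Proof. by move=> e; apply: (@mulg_cancel _ a); rewrite e mulgV. Qed.

Lemma eq_of_mulV (G : grp) (a b : G) : gmul (ginv a) b = gone G -> b = a.
Proof. by move=> e; rewrite -(mulKVg a b) e mulg1. Qed.

Lemma hom1 (G H : grp) (f : G -> H) : is_hom f -> f (gone G) = gone H.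
Proof.
move=> hf; apply: (@mulg_cancel _ (f (gone G))).
by rewrite -hf gmul1 mulg1.
Qed.

Lemma homV (G H : grp) (f : G -> H) : is_hom f -> forall x, f (ginv x) = ginv (f x).
Proof. by move=> hf x; apply: inv_uniq; rewrite -hf gmulV hom1. Qed.

Lemma inv1 (G : grp) : ginv (gone G) = gone G.
Proof. by symmetry; apply: inv_uniq; rewrite gmul1. Qed.

Notation pn n m := (@pnm _ n m).

Lemma pnm_le (S : invseq) n m (h : n <= m) (x : S m) :
  pn n m x = pdown (castS (esym (subnK h)) x).
Proof.
rewrite /pnm.
generalize (erefl (n <= m)).
case: {3 4}(n <= m) h => [h e|hf]; last by rewrite hf.
by rewrite (eq_irrelevance h e).
Qed.

Lemma pdown_cast (S : invseq) n k j (e : k + n = j + n) (x : S (k + n)) :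
  pdown (castS e x) = pdown x.
Proof.
have kj : j = k by apply/eqP; rewrite -(eqn_add2r n) e.
subst j; by rewrite (eq_irrelevance e erefl).
Qed.

Lemma pnmE (S : invseq) n k (x : S (k + n)) : pn n (k + n) x = pdown x.
Proof.
rewrite (pnm_le (leq_addl k n)).
have e : k + n = (k + n - n) + n by rewrite subnK // leq_addl.
move: (esym (subnK (leq_addl k n))) => e'.
by rewrite (pdown_cast e').
Qed.

Lemma pnm_id (S : invseq) n (x : S n) : pn n n x = x.
Proof. exact: (@pnmE S n 0 x). Qed.

Lemma pnm_S (S : invseq) n m (x : S m.+1) : n <= m -> pn n m.+1 x = pn n m (sp S m x).
Proof.
move=> h; move: x; have [k ->] : exists k, m = k + n by exists (m - n); rewrite subnK.
move=> x; rewrite (@pnmE S n k.+1 x) pnmE //.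
Qed.

Lemma leq_split n m : n <= m -> exists k, m = k + n.
Proof. by move=> h; exists (m - n); rewrite subnK. Qed.

Lemma pnm_comp (S : invseq) n m k (x : S k) : n <= m -> m <= k ->
  pn n m (pn m k x) = pn n k x.
Proof.
move=> hnm /leq_split [d e]; subst k; elim: d x => [|d IH] x; first by rewrite pnm_id.
rewrite (@pnm_S S m (d + m) x) ?leq_addl // IH.
by rewrite (@pnm_S S n (d + m) x) // (leq_trans hnm) ?leq_addl.
Qed.

Lemma sp_pnm (S : invseq) i m (y : S m) : i < m -> sp S i (pn i.+1 m y) = pn i m y.
Proof.
move=> h; rewrite -(@pnm_comp S i i.+1 m y) // ?(ltnW h) //.
by rewrite (@pnm_S S i i) // pnm_id.
Qed.

Lemma pnm_hom (S : invseq) n m : n <= m -> is_hom (@pnm S n m).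
Proof.
move=> /leq_split [d e]; subst m; elim: d => [|d IH] x y; first by rewrite !pnm_id.
by rewrite !(@pnm_S S n (d + n)) ?leq_addl // sp_hom IH.
Qed.

Lemma lm_pnm (G H : invseq) (f : forall n, G n -> H n) : level_morphism f ->
  forall n m (x : G m), n <= m -> f n (pn n m x) = pn n m (f m x).
Proof.
move=> [_ hf] n m x /leq_split [d e]; subst m; elim: d x => [|d IH] x; first by rewrite !pnm_id.
by rewrite !(@pnm_S _ n (d + n)) ?leq_addl // IH hf.
Qed.

Lemma pnm_closed (S : invseq) (R : forall i, S i -> Prop) :
  (forall i x, R i.+1 x -> R i (sp S i x)) ->
  forall n m (x : S m), n <= m -> R m x -> R n (pn n m x).
Proof.
move=> hR n m x /leq_split [d e]; subst m; elim: d x => [|d IH] x; first by rewrite !pnm_id.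
by move=> hx; rewrite !(@pnm_S _ n (d + n)) ?leq_addl //; apply: IH; apply: hR.
Qed.

Lemma thread1 (S : invseq) : thread (fun i => gone (S i)).
Proof. by move=> i; rewrite hom1 //; apply: sp_hom. Qed.

Lemma P1 (S : invseq) n : proj_image (gone (S n)).
Proof. by exists (fun i => gone (S i)); split=> //; apply: thread1. Qed.

Lemma Pmul (S : invseq) n (x y : S n) : proj_image x -> proj_image y -> proj_image (gmul x y).
Proof.
move=> [t [ht <-]] [u [hu <-]]; exists (fun i => gmul (t i) (u i)); split=> // i.
by rewrite sp_hom ht hu.
Qed.

Lemma Pinv (S : invseq) n (x : S n) : proj_image x -> proj_image (ginv x).
Proof.
move=> [t [ht <-]]; exists (fun i => ginv (t i)); split=> // i.
by rewrite homV ?ht //; apply: sp_hom.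
Qed.

Lemma Psp (S : invseq) n (x : S n.+1) : proj_image x -> proj_image (sp S n x).
Proof. by move=> [t [ht <-]]; exists t; split. Qed.

Lemma Ppnm (S : invseq) n m (x : S m) : n <= m -> proj_image x -> proj_image (pn n m x).
Proof. by move=> h; apply: (@pnm_closed S (fun i y => proj_image y)) => // i y; apply: Psp. Qed.

Lemma Plift (S : invseq) n (x : S n) : proj_image x -> exists y : S n.+1, proj_image y /\ sp S n y = x.
Proof. by move=> [t [ht <-]]; exists (t n.+1); split=> //; exists t. Qed.

Lemma dep_choice (T : nat -> Type) (Q : forall i, T i -> Prop)
  (R : forall i, T i -> T i.+1 -> Prop) (x0 : T 0) :
  Q 0 x0 -> (forall i x, Q i x -> exists y, Q i.+1 y /\ R i x y) ->
  exists u : forall i, T i, u 0 = x0 /\ forall i, Q i (u i) /\ R i (u i) (u i.+1).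
Proof.
move=> Q0 step.
pose st i (w : {x : T i | Q i x}) : {y : T i.+1 | Q i.+1 y /\ R i (sval w) y} :=
  constructive_indefinite_description _ (step i (sval w) (svalP w)).
pose fix v i : {x : T i | Q i x} :=
  match i return {x : T i | Q i x} with
  | 0 => exist _ x0 Q0
  | i'.+1 => let y := st i' (v i') in exist _ (sval y) (proj1 (svalP y)) end.
exists (fun i => sval (v i)); split => // i; split; first exact (svalP (v i)).
exact: (proj2 (svalP (st i (v i)))).
Qed.

Notation cid := constructive_indefinite_description.

Lemma thread_lemma (S : invseq) (R : forall i, S i -> Prop) :
  (forall i x, R i.+1 x -> R i (sp S i x)) ->
  (forall n, exists n1, n <= n1 /\ forall m, n1 <= m -> forall z : S n1, R n1 z ->
       exists y : S m, R m y /\ pn n m y = pn n n1 z) ->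
  forall n, exists n1, n <= n1 /\ forall z : S n1, R n1 z ->
    exists t, thread t /\ (forall i, R i (t i)) /\ t n = pn n n1 z.
Proof.
move=> hR hML.
pose s i := sval (cid _ (hML i)).
have hs : forall i, i <= s i /\ forall m, s i <= m -> forall z : S (s i), R (s i) z ->
       exists y : S m, R m y /\ pn i m y = pn i (s i) z.
  by move=> i; exact: (svalP (cid _ (hML i))).
pose St j (x : S j) := exists z : S (s j), R (s j) z /\ pn j (s j) z = x.
have StR j x : St j x -> R j x.
  by move=> [z [hz <-]]; apply: pnm_closed => //; case: (hs j).
have step j x : St j x -> exists x' : S j.+1, St j.+1 x' /\ sp S j x' = x.
  move=> [z [hz <-]].
  have [hj1 _] := hs j.+1.
  have [hj hj'] := hs j.
  have [y [hy hyz]] := hj' (maxn (s j) (s j.+1)) (leq_maxl _ _) z hz.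
  exists (pn j.+1 _ y); split; last by rewrite sp_pnm // (leq_trans hj1) // leq_maxr.
  exists (pn (s j.+1) _ y); split.
    by apply: pnm_closed => //; rewrite leq_maxr.
  by rewrite pnm_comp // leq_maxr.
move=> n; exists (s n); split; first by case: (hs n).
move=> z hz.
have [u [u0 hu]] := @dep_choice (fun i => S (i + n)) (fun i x => St (i + n) x)
   (fun i x y => sp S (i + n) y = x) (pn n (s n) z : S (0 + n)) (ex_intro _ z (conj hz erefl))
   (fun i x hx => step (i + n) x hx).
have un : forall j, pn n (j + n) (u j) = pn n (s n) z.
  elim=> [|j IH]; first by rewrite pnm_id u0.
  by rewrite (@pnm_S S n (j + n)) ?leq_addl // (proj2 (hu j)).
exists (fun i => pn i (i + n) (u i)); split; last split.
- move=> i /=. rewrite (@sp_pnm S i (i.+1 + n)); last by rewrite ltnS leq_addr.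
  by rewrite (@pnm_S S i (i + n)) ?leq_addr // (proj2 (hu i)).
- move=> i; apply: pnm_closed => //; first exact: leq_addr.
  exact: StR (proj1 (hu i)).
- by rewrite /= un.
Qed.

Lemma stable_P (S : invseq) : mittag_leffler S ->
  forall n, exists a, n <= a /\ forall m, a <= m -> forall x : S m, proj_image (pn n m x).
Proof.
move=> hML.
have H := @thread_lemma S (fun _ _ => True) (fun _ _ _ => I).
have {}H : forall n, exists n1, n <= n1 /\ forall z : S n1, True ->
    exists t, thread t /\ (forall i : nat, True) /\ t n = pn n n1 z.
  refine (H _) => n; have [n1 [hn1 h]] := hML n; exists n1; split; first exact: ltnW.
  move=> m; rewrite leq_eqVlt => /orP [/eqP e|hm] z _.
    by subst m; exists z.
  by have [y hy] := (proj2 (h m hm (pn n n1 z))) (ex_intro _ z erefl); exists y.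
move=> n; have [n1 [hn1 h]] := H n.
exists n1; split=> // m hm x.
have [t [ht [_ htn]]] := h (pn n1 m x) I.
by exists t; split=> //; rewrite htn pnm_comp.
Qed.

Lemma L1 (G H : invseq) (f : forall n, G n -> H n) : level_morphism f ->
  (forall h, thread h -> exists g, thread g /\ forall n, f n (g n) = h n) ->
  forall k : forall i, G i, (forall i, proj_image (k i) /\ f i (k i) = gone (H i)) ->
  exists d : forall i, G i, forall i, (proj_image (d i) /\ f i (d i) = gone (H i)) /\
     d i = gmul (k i) (sp G i (d i.+1)).
Proof.
move=> [fh fc] hsurj k hk.
have [g [_ hg]] := @dep_choice (fun i => G i) (fun i x => proj_image x)
   (fun i x y => sp G i y = gmul (ginv (k i)) x) (gone (G 0)) (P1 _ _)
   (fun i x hx => Plift (Pmul (Pinv (proj1 (hk i))) hx)).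
have thr : thread (fun i => f i (g i)).
  move=> i /=; rewrite -fc (proj2 (hg i)) fh (homV (fh i)) (proj2 (hk i)) inv1 gmul1 //.
have [ga [hga hfga]] := hsurj _ thr.
have Pga i : proj_image (ga i) by exists ga.
exists (fun i => gmul (g i) (ginv (ga i))) => i; split; first split.
- exact: Pmul (proj1 (hg i)) (Pinv (Pga i)).
- by rewrite fh (homV (fh i)) hfga mulgV.
- rewrite sp_hom (homV (@sp_hom G i)).
  by rewrite hga (proj2 (hg i)) -gmulA mulKVg.
Qed.

Lemma cantor (c : (nat -> bool) -> nat) : ~ injective c.
Proof.
move=> ci.
pose pick i := epsilon (inhabits (fun _ : nat => false)) (fun e => c e = i).
pose dl i := ~~ pick i i.
have e : pick (c dl) = dl.
  apply: ci; apply: (epsilon_spec (inhabits (fun _ : nat => false)) (fun e => c e = c dl)).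
  by exists dl.
have h : dl (c dl) = ~~ pick (c dl) (c dl) := erefl.
rewrite e in h; move: h; by case: (dl (c dl)).
Qed.

From Stdlib Require Import Classical FunctionalExtensionality.

Lemma K_ML (G H : invseq) (f : forall n, G n -> H n) : level_morphism f ->
  (forall h, thread h -> exists g, thread g /\ forall n, f n (g n) = h n) ->
  (forall n, @countable_set (G n) (@proj_image G n)) ->
  forall n, exists n1, n <= n1 /\ forall m, n1 <= m -> forall z : G n1,
    (proj_image z /\ f n1 z = gone (H n1)) ->
    exists y : G m, (proj_image y /\ f m y = gone (H m)) /\ pn n m y = pn n n1 z.
Proof.
move=> hl hs hc n.
pose K i (x : G i) := proj_image x /\ f i x = gone (H i).
apply: NNPP => hneg.
have fail : forall n1, exists m, exists z : G n1, n <= n1 -> n1 < m /\ K n1 z /\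
    forall y : G m, K m y -> pn n m y <> pn n n1 z.
  move=> n1; case: (leqP n n1) => hn1; last first.
    by exists n1, (gone _).
  apply: NNPP => h2; apply: hneg; exists n1; split=> // m hm z hz.
  apply: NNPP => h3; apply: h2; exists m, z => _; split; last split=> //.
    rewrite ltn_neqAle hm andbT; apply/eqP => e; subst m; apply: h3; by exists z.
  by move=> y hy e; apply: h3; exists y.
pose fz n1 := cid _ (fail n1).
pose mf n1 := sval (fz n1).
pose zf n1 : G n1 := sval (cid _ (svalP (fz n1))).
have zspec n1 : n <= n1 -> n1 < mf n1 /\ K n1 (zf n1) /\
    forall y : G (mf n1), K (mf n1) y -> pn n (mf n1) y <> pn n n1 (zf n1).
  exact: (svalP (cid _ (svalP (fz n1)))).
pose ms := fix ms j := if j is j'.+1 then mf (ms j') else n.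
have msn j : n <= ms j.
  elim: j => [|j IH] //=; exact: ltnW (leq_ltn_trans IH (proj1 (zspec _ IH))).
have msS j : ms j < ms j.+1 by exact: (proj1 (zspec _ (msn j))).
have ms_lt i j : i < j -> ms i < ms j.
  move=> hij; elim: j hij => [//|j IH]; rewrite ltnS leq_eqVlt => /orP [/eqP -> //|h].
  exact: ltn_trans (IH h) (msS j).
have ms_le i j : i <= j -> ms i <= ms j.
  by rewrite leq_eqVlt => /orP [/eqP -> //|h]; apply: ltnW; apply: ms_lt.
have ms_inj i j : ms i = ms j -> i = j.
  by move=> e; case: (ltngtP i j) => // h; move: (ms_lt _ _ h); rewrite e ltnn.
have ms_ge j : j + n <= ms j.
  elim: j => [|j IH] //; exact: leq_ltn_trans IH (msS j).
pose sel (e : nat -> bool) i := [exists j : 'I_i.+1, (ms j == i) && e j].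
have sel_iff e i : sel e i <-> exists j, ms j = i /\ e j.
  split; first by move/existsP => [j /andP [/eqP h1 h2]]; exists j.
  move=> [j [h1 h2]]; apply/existsP.
  have hj : j < i.+1 by rewrite ltnS -h1 (leq_trans _ (ms_ge j)) // leq_addr.
  by exists (Ordinal hj); rewrite /= h1 eqxx h2.
pose kk e i : G i := if sel e i then zf i else gone (G i).
have hk e i : K i (kk e i).
  rewrite /kk; case hsel: (sel e i); last first.
    by split; [apply: P1 | apply: hom1; apply: (proj1 hl)].
  have [j [hj _]] := (proj1 (sel_iff e i)) hsel.
  by rewrite -hj; exact: (proj1 (proj2 (zspec _ (msn j)))).
pose dd e := sval (cid _ (L1 hl hs (hk e))).
have dspec e i : K i (dd e i) /\ dd e i = gmul (kk e i) (sp G i (dd e i.+1)).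
  exact: (svalP (cid _ (L1 hl hs (hk e))) i).
pose Pr e := fix Pr N : G n := if N is N'.+1 then gmul (Pr N') (pn n (N' + n) (kk e (N' + n))) else gone (G n).
have claim e N : dd e n = gmul (Pr e N) (pn n (N + n) (dd e (N + n))).
  elim: N => [|N IH]; first by rewrite /= pnm_id gmul1.
  rewrite IH {1}(proj2 (dspec e (N + n))) (pnm_hom (leq_addl _ _)).
  by rewrite -(@pnm_S G n (N + n)) ?leq_addl // gmulA.
have Pr_eq e e' N : (forall i, i < N + n -> sel e i = sel e' i) -> Pr e N = Pr e' N.
  elim: N => [//|N IH] h /=; rewrite IH; last by move=> i hi; apply: h; apply: ltnW.
  by rewrite /kk h.
have Pr_stab e N1 d : (forall i, N1 + n <= i -> i < d + N1 + n -> sel e i = false) ->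
    Pr e (d + N1) = Pr e N1.
  elim: d => [//|d IH] h /=; rewrite IH; last first.
    by move=> i h1 h2; apply: h => //; apply: (ltn_trans h2); rewrite ltn_add2r ltnS.
  rewrite /kk h ?leq_add2r ?leq_addl //.
  by rewrite hom1 ?mulg1 //; apply: pnm_hom; apply: leq_addl.
have key e e' J : (forall j, j < J -> e j = e' j) -> e J = true -> e' J = false ->
    dd e n = dd e' n -> False.
  move=> hlt eJ e'J hd.
  have hN e0 : dd e0 n = gmul (Pr e0 (ms J.+1 - n)) (pn n (ms J.+1) (dd e0 (ms J.+1))).
    by move: (claim e0 (ms J.+1 - n)); rewrite subnK.
  have mJ := msS J; have nJ := msn J.
  have hsplit : ms J.+1 - n = (ms J.+1 - n - (ms J - n).+1) + (ms J - n).+1 by lia.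
  have stab e0 : Pr e0 (ms J.+1 - n) = Pr e0 (ms J - n).+1.
    rewrite hsplit Pr_stab // => i h1 h2.
    have {h1 h2} [h1 h2] : ms J < i /\ i < ms J.+1 by lia.
    apply/negbTE/negP => /sel_iff [j [hj _]].
    by case: (leqP j J) => hjJ; have := ms_le _ _ hjJ; lia.
  have step0 e0 : Pr e0 (ms J - n).+1 = gmul (Pr e0 (ms J - n)) (pn n (ms J) (kk e0 (ms J))).
    by rewrite /=; rewrite subnK.
  have selJ : sel e (ms J) by apply/sel_iff; exists J.
  have selJ' : sel e' (ms J) = false.
    apply/negbTE/negP => /sel_iff [j [hj hj']].
    by move: hj'; rewrite (ms_inj _ _ hj) e'J.
  have heq : Pr e (ms J - n) = Pr e' (ms J - n).
    apply: Pr_eq => i hi; rewrite subnK // in hi.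
    have aux (e1 e2 : nat -> bool) : (forall j, j < J -> e1 j = e2 j) -> sel e1 i -> sel e2 i.
      move=> h12 /sel_iff [j [hj hj']]; apply/sel_iff; exists j.
      split=> //; rewrite -h12 //; case: (leqP J j) => // hjJ.
      by have := ms_le _ _ hjJ; lia.
    by apply/idP/idP; apply: aux => // j hj; rewrite hlt.
  move: hd; rewrite (hN e) (hN e') !stab !step0 /kk selJ selJ' heq.
  rewrite (hom1 (pnm_hom nJ)) mulg1 -gmulA => /mulg_cancel hd.
  have hz := proj2 (proj2 (zspec _ (msn J))) : forall y : G (ms J.+1), K _ y ->
      pn n (ms J.+1) y <> pn n (ms J) (zf (ms J)).
  have hP := @pnm_hom G _ _ (ltnW (leq_ltn_trans nJ mJ)).
  apply: (hz (gmul (dd e' (ms J.+1)) (ginv (dd e (ms J.+1))))).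
    have [[P1 f1] _] := dspec e (ms J.+1); have [[P2 f2] _] := dspec e' (ms J.+1).
    split; first exact: Pmul P2 (Pinv P1).
    by rewrite (proj1 hl) (homV (proj1 hl _)) f1 f2 inv1 gmul1.
  by rewrite hP (homV hP) -hd -gmulA mulgV mulg1.
have inj e e' : dd e n = dd e' n -> e = e'.
  move=> hd; apply: functional_extensionality => J; elim/ltn_ind: J => J IH.
  case eJ: (e J); case e'J: (e' J) => //; exfalso.
    exact: key e e' J IH eJ e'J hd.
  by apply: (key e' e J) => // j hj; symmetry; apply: IH.
have [c hcinj] := hc n.
apply: (@cantor (fun e => c (exist _ (dd e n) (proj1 (proj1 (dspec e n)))))).
by move=> e e' /hcinj /(congr1 sval) /= hd; apply: inj.
Qed.

Lemma K_triv (G H : invseq) (f : forall n, G n -> H n) : level_morphism f ->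
  induces_iso_lim f -> (forall n, @countable_set (G n) (@proj_image G n)) ->
  forall n, exists c, n <= c /\ forall m, c <= m -> forall x : G m,
    proj_image x -> f m x = gone (H m) -> pn n m x = gone (G n).
Proof.
move=> hl [hinj hs] hc.
have clo : forall i (x : G i.+1), proj_image x /\ f i.+1 x = gone (H i.+1) ->
    proj_image (sp G i x) /\ f i (sp G i x) = gone (H i).
  move=> i x [hx hfx]; split; first exact: Psp.
  by rewrite (proj2 hl) hfx hom1 //; apply: sp_hom.
have TL := @thread_lemma G (fun i x => proj_image x /\ f i x = gone (H i)) clo (K_ML hl hs hc).
move=> n; have [n1 [hn h]] := TL n; exists n1; split => // m hm x hx hfx.
rewrite -(pnm_comp _ hn hm).
have [t [ht [hK htn]]] := h (pn n1 m x) (conj (Ppnm hm hx)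
   (etrans (lm_pnm hl x hm) (etrans (f_equal _ hfx) (hom1 (pnm_hom hm))))).
rewrite -htn; apply: (hinj t (fun i => gone (G i)) ht (thread1 G)) => i.
by rewrite (proj2 (hK i)) hom1 //; apply: (proj1 hl).
Qed.

Unset Implicit Arguments.
Set Strict Implicit.

Theorem theorem8p17 (G H : invseq) (f : forall n, G n -> H n) :
  @level_morphism G H f ->
  @induces_iso_lim G H f ->
  mittag_leffler G -> mittag_leffler H ->
  (forall n, @countable_set (G n) (@proj_image G n)) ->
  @tower_iso G H tid_idx f.
Proof.
move=> hl hiso hMG hMH hc.
have hKT := K_triv hl hiso hc.
have [_ hs] := hiso.
have aG := stable_P hMG; have aH := stable_P hMH.
pose cf n := sval (cid _ (hKT n)).
have hcf n : n <= cf n /\ forall m, cf n <= m -> forall x : G m,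
    proj_image x -> f m x = gone (H m) -> pn n m x = gone (G n).
  exact: (svalP (cid _ (hKT n))).
pose kk := fix kk n := if n is n'.+1 then maxn (kk n') (cf n'.+1) else cf 0.
have kk_ge n : cf n <= kk n by case: n => [|n] //=; rewrite leq_maxr.
have kk_mono n n' : n <= n' -> kk n <= kk n'.
  elim: n' => [|n' IH]; first by rewrite leqn0 => /eqP ->.
  rewrite leq_eqVlt => /orP [/eqP -> //|]; rewrite ltnS => /IH h.
  by apply: (leq_trans h); rewrite /= leq_maxl.
have kkn n : n <= kk n := leq_trans (proj1 (hcf n)) (kk_ge n).
have kkK n m : kk n <= m -> forall x : G m, proj_image x -> f m x = gone (H m) ->
    pn n m x = gone (G n).
  by move=> h; apply: (proj2 (hcf n)); apply: leq_trans (kk_ge n) h.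
pose ah n := sval (cid _ (aH n)).
have hah n : n <= ah n /\ forall m, ah n <= m -> forall x : H m, proj_image (pn n m x).
  exact: (svalP (cid _ (aH n))).
pose ag n := sval (cid _ (aG n)).
have hag n : n <= ag n /\ forall m, ag n <= m -> forall x : G m, proj_image (pn n m x).
  exact: (svalP (cid _ (aG n))).
pose Psi n := ah (kk n).
have kkPsi n : kk n <= Psi n := proj1 (hah (kk n)).
have exx n (y : H (Psi n)) : exists x : G (kk n), proj_image x /\ f (kk n) x = pn (kk n) (Psi n) y.
  have [t [ht htn]] := proj2 (hah (kk n)) (Psi n) (leqnn _) y.
  have [g [hg hfg]] := hs t ht.
  by exists (g (kk n)); split; [exists g | rewrite hfg htn].
pose gg n (y : H (Psi n)) : G n := pn n (kk n) (epsilon (inhabits (gone _))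
   (fun x => proj_image x /\ f (kk n) x = pn (kk n) (Psi n) y)).
have gspec n y : exists x, (proj_image x /\ f (kk n) x = pn (kk n) (Psi n) y) /\
    gg n y = pn n (kk n) x.
  by eexists; split; [apply: (epsilon_spec _ _ (exx n y)) | reflexivity].
have fh := proj1 hl.
have guniq n y z : proj_image z -> f (kk n) z = pn (kk n) (Psi n) y -> gg n y = pn n (kk n) z.
  move=> hz hfz; have [x [[hx hfx] ->]] := gspec n y.
  have hp := @pnm_hom G _ _ (kkn n).
  apply: eq_of_mulV; rewrite -(homV hp) -hp; apply: (kkK n) => //.
    exact: Pmul (Pinv hz) hx.
  by rewrite fh (homV (fh _)) hfz hfx gmulV.
exists Psi, gg; split; [split|split].
- move=> n y y'.
  have [x [[hx hfx] ->]] := gspec n y; have [x' [[hx' hfx'] ->]] := gspec n y'.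
  rewrite (guniq n _ (gmul x x')); first by rewrite (pnm_hom (kkn n)).
    exact: Pmul.
  by rewrite fh hfx hfx' (@pnm_hom H _ _ (kkPsi n)).
- move=> n n' hlt; exists (maxn (Psi n) (Psi n')); split; first exact: leq_maxl.
  split; first exact: leq_maxr.
  move=> y.
  have [x' [[hx' hfx'] ->]] := gspec n' (pn (Psi n') _ y).
  have kkm := kk_mono _ _ (ltnW hlt).
  rewrite (guniq n _ (pn (kk n) (kk n') x')).
  + by rewrite !pnm_comp // ?(ltnW hlt) ?kkn // (leq_trans (ltnW hlt) (kkn n')).
  + exact: Ppnm.
  + rewrite lm_pnm // hfx' !pnm_comp // ?leq_maxr ?leq_maxl //.
    exact: (leq_trans kkm (kkPsi n')).
- move=> n; rewrite /tcomp_idx /tid_idx /tcomp_map /tid_map /=.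
  exists (maxn (Psi n) (ag (kk n))); split; first exact: leq_maxl.
  split; first by rewrite (leq_trans (kkn n)) // (leq_trans (kkPsi n)) // leq_maxl.
  move=> x.
  rewrite (guniq n _ (pn (kk n) _ x)).
  + by rewrite pnm_comp // (leq_trans (kkPsi n)) // leq_maxl.
  + by apply: (proj2 (hag (kk n))); rewrite leq_maxr.
  + rewrite !lm_pnm // ?leq_maxl ?(leq_trans (kkPsi n)) ?leq_maxl //.
    by rewrite pnm_comp // leq_maxl.
- move=> n; rewrite /tcomp_idx /tid_idx /tcomp_map /tid_map /=.
  exists (Psi n); split=> //; split; first exact: (leq_trans (kkn n)).
  move=> y; rewrite pnm_id.
  have [x [[hx hfx] ->]] := gspec n y.
  by rewrite lm_pnm // hfx pnm_comp.
Qed.
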